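(* Let $A\in\mathbb{R}^{n\times m}$ have distinct columns with $a_1=0$, and let $S\subset\mathbb{R}^m$ be any set of SAGE-feasible slacks for $A$, i.e. a set such that for every $c\in\mathbb{R}^m$ the signomial $f=\mathrm{Sig}(A,c)$ satisfies $$f_{\mathsf{SAGE}}=\inf\{c^\top\exp(y): y\in\mathcal{R}(A^\top)+S\}.$$ Let $T(A)=\log\,\mathrm{cl}\,\mathrm{conv}\,\exp\mathcal{R}(A^\top)$ (the moment preimage). Then $C_{\mathrm{SAGE}}(A)=C_{\mathrm{NNS}}(A)$ if and only if $S\subset T(A)$.
   Context: For $c\in\mathbb{R}^m$, $\mathrm{Sig}(A,c)$ denotes $x\mapsto\sum_{i=1}^m c_i\exp(a_i^\top x)$. $C_{\mathrm{NNS}}(A)=\{c:\mathrm{Sig}(A,c)(x)\ge 0\ \forall x\in\mathbb{R}^n\}$, $C_{\mathrm{AGE}}(A,k)=\{c\in C_{\mathrm{NNS}}(A): c_i\ge 0\ \forall i\ne k\}$, $C_{\mathrm{SAGE}}(A)=\sum_{k=1}^m C_{\mathrm{AGE}}(A,k)$. For $f=\mathrm{Sig}(A,c)$ with $a_1=0$: $f_{\mathsf{SAGE}}=\sup\{\gamma\in\mathbb{R}: c-\gamma e_1\in C_{\mathrm{SAGE}}(A)\}$. $\mathcal{R}(A^\top)$ is the range of $A^\top$ in $\mathbb{R}^m$; $\exp$ and $\log$ act entrywise (with $\log 0=-\infty$) and elementwise on sets; $\mathrm{cl}\,\mathrm{conv}$ is the closed convex hull; $+$ between sets is the Minkowski sum.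 *)

(* Defs.v *)
From Stdlib Require Import Reals.
Open Scope R_scope.

(* Vectors in R^k are functions nat -> R; only indices < k are meaningful.
   A matrix A in R^{n x m} is given by its columns: A i j = j-th coordinate
   of column a_{i+1}, for i < m, j < n (0-based: column a_1 is A 0). *)

Fixpoint rsum (k : nat) (f : nat -> R) : R :=
  match k with
  | O => 0
  | S k' => rsum k' f + f k'
  end.

Definition dotcol (n : nat) (A : nat -> nat -> R) (i : nat) (x : nat -> R) : R :=
  rsum n (fun j => A i j * x j).

Definition Sig (n m : nat) (A : nat -> nat -> R) (c : nat -> R) (x : nat -> R) : R :=
  rsum m (fun i => c i * exp (dotcol n A i x)).

Definition C_NNS (n m : nat) (A : nat -> nat -> R) (c : nat -> R) : Prop :=
  forall x : nat -> R, 0 <= Sig n m A c x.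

Definition C_AGE (n m : nat) (A : nat -> nat -> R) (k : nat) (c : nat -> R) : Prop :=
  C_NNS n m A c /\ (forall i, (i < m)%nat -> i <> k -> 0 <= c i).

Definition C_SAGE (n m : nat) (A : nat -> nat -> R) (c : nat -> R) : Prop :=
  exists cs : nat -> nat -> R,
    (forall k, (k < m)%nat -> C_AGE n m A k (cs k)) /\
    (forall i, (i < m)%nat -> c i = rsum m (fun k => cs k i)).

Definition shift_e1 (c : nat -> R) (g : R) : nat -> R :=
  fun i => match i with O => c i - g | S _ => c i end.

(* Extended reals, for sup / inf of possibly empty or unbounded sets. *)
Inductive ERbar : Type := Fin (r : R) | PInf | MInf.

Definition ERle (u v : ERbar) : Prop :=
  match u, v with
  | MInf, _ => True
  | _, PInf => True
  | Fin a, Fin b => a <= b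
  | _, _ => False
  end.

Definition is_sup_E (X : R -> Prop) (u : ERbar) : Prop :=
  (forall x, X x -> ERle (Fin x) u) /\
  (forall v, (forall x, X x -> ERle (Fin x) v) -> ERle u v).

Definition is_inf_E (X : R -> Prop) (u : ERbar) : Prop :=
  (forall x, X x -> ERle u (Fin x)) /\
  (forall v, (forall x, X x -> ERle v (Fin x)) -> ERle v u).

(* f_SAGE = sup { gamma : c - gamma e_1 in C_SAGE(A) } *)
Definition SAGE_set (n m : nat) (A : nat -> nat -> R) (c : nat -> R) (g : R) : Prop :=
  C_SAGE n m A (shift_e1 c g).

Definition in_range_plus (n m : nat) (A : nat -> nat -> R) (S : (nat -> R) -> Prop)
  (y : nat -> R) : Prop :=
  exists (x : nat -> R) (s : nat -> R), S s /\
    forall i, (i < m)%nat -> y i = dotcol n A i x + s i.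

Definition slack_values (n m : nat) (A : nat -> nat -> R) (S : (nat -> R) -> Prop)
  (c : nat -> R) (t : R) : Prop :=
  exists y, in_range_plus n m A S y /\ t = rsum m (fun i => c i * exp (y i)).

Definition SAGE_feasible_slacks (n m : nat) (A : nat -> nat -> R)
  (S : (nat -> R) -> Prop) : Prop :=
  forall c : nat -> R, exists u : ERbar,
    is_sup_E (SAGE_set n m A c) u /\ is_inf_E (slack_values n m A S c) u.

Definition exp_range (n m : nat) (A : nat -> nat -> R) (w : nat -> R) : Prop :=
  exists x : nat -> R, forall i, (i < m)%nat -> w i = exp (dotcol n A i x).

Definition conv (m : nat) (X : (nat -> R) -> Prop) (z : nat -> R) : Prop :=
  exists (k : nat) (lam : nat -> R) (p : nat -> nat -> R),
    (forall l, (l < k)%nat -> 0 <= lam l /\ X (p l)) /\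
    rsum k lam = 1 /\
    (forall i, (i < m)%nat -> z i = rsum k (fun l => lam l * p l i)).

Definition closure (m : nat) (X : (nat -> R) -> Prop) (z : nat -> R) : Prop :=
  forall eps, 0 < eps -> exists w, X w /\
    forall i, (i < m)%nat -> Rabs (z i - w i) < eps.

(* T(A) = log cl conv exp R(A^T), as a subset of R^m:
   y in T(A) iff exp(y) in cl conv exp R(A^T). *)
Definition T_moment (n m : nat) (A : nat -> nat -> R) (y : nat -> R) : Prop :=
  closure m (conv m (exp_range n m A)) (fun i => exp (y i)).

Definition distinct_columns (n m : nat) (A : nat -> nat -> R) : Prop :=
  forall i k, (i < m)%nat -> (k < m)%nat -> i <> k ->
    exists j, (j < n)%nat /\ A i j <> A k j.

(* Main.v *)
Require Import Defs.
From Stdlib Require Import Reals Lra Lia Psatz Classical ClassicalEpsilon List.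
Open Scope R_scope.


Lemma rsum_ext k f g : (forall i, (i < k)%nat -> f i = g i) -> rsum k f = rsum k g.
Proof.
  induction k; simpl; intros H; auto.
  rewrite IHk by (intros; apply H; lia). rewrite H by lia. reflexivity.
Qed.

Lemma rsum_plus k f g : rsum k (fun i => f i + g i) = rsum k f + rsum k g.
Proof. induction k; simpl; [lra|]. rewrite IHk. lra. Qed.

Lemma rsum_scal k a f : rsum k (fun i => a * f i) = a * rsum k f.
Proof. induction k; simpl; [lra|]. rewrite IHk. lra. Qed.

Lemma rsum_scalr k a f : rsum k (fun i => f i * a) = rsum k f * a.
Proof. induction k; simpl; [lra|]. rewrite IHk. lra. Qed.

Lemma rsum_minus k f g : rsum k (fun i => f i - g i) = rsum k f - rsum k g.
Proof. induction k; simpl; [lra|]. rewrite IHk. lra. Qed.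

Lemma rsum_zero k : rsum k (fun _ => 0) = 0.
Proof. induction k; simpl; [lra|]. rewrite IHk. lra. Qed.

Lemma rsum_nonneg k f : (forall i, (i < k)%nat -> 0 <= f i) -> 0 <= rsum k f.
Proof.
  induction k; simpl; intros H; [lra|].
  assert (0 <= rsum k f) by (apply IHk; intros; apply H; lia).
  assert (0 <= f k) by (apply H; lia). lra.
Qed.

Lemma rsum_le k f g : (forall i, (i < k)%nat -> f i <= g i) -> rsum k f <= rsum k g.
Proof.
  induction k; simpl; intros H; [lra|].
  assert (rsum k f <= rsum k g) by (apply IHk; intros; apply H; lia).
  assert (f k <= g k) by (apply H; lia). lra.
Qed.

Lemma rsum_ge_term k f i : (forall j, (j < k)%nat -> 0 <= f j) -> (i < k)%nat ->
  f i <= rsum k f.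
Proof.
  induction k; simpl; intros H Hi; [lia|].
  assert (0 <= rsum k f) by (apply rsum_nonneg; intros; apply H; lia).
  destruct (Nat.eq_dec i k) as [->|Hne].
  - lra.
  - assert (f i <= rsum k f) by (apply IHk; [intros; apply H; lia| lia]).
    assert (0 <= f k) by (apply H; lia). lra.
Qed.

Lemma rsum_if k i a f : (i < k)%nat ->
  rsum k (fun j => if Nat.eqb j i then a else f j) = rsum k f - f i + a.
Proof.
  induction k; simpl; intros Hi; [lia|].
  destruct (Nat.eq_dec i k) as [->|Hne].
  - rewrite Nat.eqb_refl.
    rewrite (rsum_ext k _ f). lra.
    intros j Hj. destruct (Nat.eqb_spec j k); [lia|auto].
  - rewrite IHk by lia. destruct (Nat.eqb_spec k i); [lia|]. lra.
Qed.

Lemma rsum_swap a b (f : nat -> nat -> R) :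
  rsum a (fun i => rsum b (fun j => f i j)) = rsum b (fun j => rsum a (fun i => f i j)).
Proof.
  induction a; simpl.
  - rewrite rsum_zero. reflexivity.
  - rewrite IHa. rewrite <- rsum_plus. reflexivity.
Qed.

Lemma rsum_app a b f : rsum (a + b) f = rsum a f + rsum b (fun l => f (a + l)%nat).
Proof.
  induction b; simpl.
  - rewrite Nat.add_0_r. lra.
  - rewrite Nat.add_succ_r. simpl. rewrite IHb. lra.
Qed.

Lemma rsum_cv k (f : nat -> nat -> R) g :
  (forall i, (i < k)%nat -> Un_cv (fun n => f n i) (g i)) ->
  Un_cv (fun n => rsum k (f n)) (rsum k g).
Proof.
  induction k; simpl; intros H.
  - intros e He. exists 0%nat. intros. unfold Rdist. rewrite Rminus_0_r, Rabs_R0. lra.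
  - apply CV_plus. apply IHk; intros; apply H; lia. apply H; lia.
Qed.

Lemma cv_const c : Un_cv (fun _ => c) c.
Proof. intros e He. exists 0%nat. intros. unfold Rdist. rewrite Rminus_diag, Rabs_R0. lra. Qed.

Lemma cv_le_lower u l d : Un_cv u l -> (forall n, d <= u n) -> d <= l.
Proof.
  intros Hu H. destruct (Rle_or_lt d l) as [|Hlt]; auto.
  destruct (Hu (d - l)) as [N HN]; [lra|].
  specialize (HN N (le_n _)). specialize (H N). unfold Rdist in HN.
  apply Rabs_def2 in HN. lra.
Qed.

Lemma eps_nat e : 0 < e -> exists N : nat, / (INR N + 1) < e.
Proof.
  intros He. destruct (archimed (/ e)) as [H1 _].
  exists (Z.to_nat (up (/ e))).
  assert (0 < / e) by (apply Rinv_0_lt_compat; auto).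
  assert (IZR (up (/ e)) <= INR (Z.to_nat (up (/ e)))).
  { rewrite INR_IZR_INZ. apply IZR_le. lia. }
  assert (0 < INR (Z.to_nat (up (/ e))) + 1) by lra.
  rewrite <- (Rinv_inv e) at 2.
  apply Rinv_lt_contravar. apply Rmult_lt_0_compat; lra. lra.
Qed.

Lemma cv_le_upper u l d : Un_cv u l -> (forall n, u n < d + / (INR n + 1)) -> l <= d.
Proof.
  intros Hu H. destruct (Rle_or_lt l d) as [|Hlt]; auto.
  destruct (eps_nat ((l - d)/2)) as [N0 HN0]; [lra|].
  destruct (Hu ((l - d)/2)) as [N HN]; [lra|].
  specialize (HN (max N N0) ltac:(lia)). specialize (H (max N N0)).
  unfold Rdist in HN. apply Rabs_def2 in HN.
  assert (/ (INR (max N N0) + 1) <= / (INR N0 + 1)).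
  { apply Rinv_le_contravar. pose proof (pos_INR N0); lra.
    apply Rplus_le_compat_r. apply le_INR. lia. }
  lra.
Qed.


Section Basics.
Variables (n m : nat) (A : nat -> nat -> R).

Lemma dotcol_plus i x y :
  dotcol n A i (fun j => x j + y j) = dotcol n A i x + dotcol n A i y.
Proof. unfold dotcol. rewrite <- rsum_plus. apply rsum_ext. intros; ring. Qed.

Lemma dotcol_zero i : dotcol n A i (fun _ => 0) = 0.
Proof. unfold dotcol. rewrite (rsum_ext n _ (fun _ => 0)). apply rsum_zero. intros; ring. Qed.

Lemma dotcol_first (Ha1 : forall j, (j < n)%nat -> A 0%nat j = 0) x :
  dotcol n A 0 x = 0.
Proof. unfold dotcol. rewrite (rsum_ext n _ (fun _ => 0)). apply rsum_zero. intros j Hj. rewrite Ha1 by auto. ring. Qed.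

Lemma Sig_lin a t b x :
  Sig n m A (fun i => a i + t * b i) x = Sig n m A a x + t * Sig n m A b x.
Proof. unfold Sig. rewrite <- rsum_scal, <- rsum_plus. apply rsum_ext. intros; ring. Qed.

Lemma Sig_ext a b x : (forall i, (i < m)%nat -> a i = b i) -> Sig n m A a x = Sig n m A b x.
Proof. intros H. unfold Sig. apply rsum_ext. intros i Hi. rewrite H; auto. Qed.

Lemma shift_e1_sum (Hm : (0 < m)%nat) c g e :
  rsum m (fun i => shift_e1 c g i * e i) = rsum m (fun i => c i * e i) - g * e 0%nat.
Proof.
  rewrite (rsum_ext m _ (fun i => if Nat.eqb i 0 then (c 0%nat - g) * e 0%nat else c i * e i)).
  - rewrite rsum_if by auto. ring.
  - intros i Hi. destruct i; simpl; reflexivity.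
Qed.

Lemma Sig_shift (Hm : (0 < m)%nat) (Ha1 : forall j, (j < n)%nat -> A 0%nat j = 0) c g x :
  Sig n m A (shift_e1 c g) x = Sig n m A c x - g.
Proof.
  unfold Sig. rewrite shift_e1_sum by auto. rewrite dotcol_first by auto. rewrite exp_0. ring.
Qed.

Lemma SAGE_NNS c : C_SAGE n m A c -> C_NNS n m A c.
Proof.
  intros [cs [Hcs Hsum]] x.
  unfold Sig. rewrite (rsum_ext m _ (fun i => rsum m (fun k => cs k i * exp (dotcol n A i x)))).
  - rewrite rsum_swap. apply rsum_nonneg. intros k Hk. apply (proj1 (Hcs k Hk)).
  - intros i Hi. rewrite Hsum by auto. rewrite <- rsum_scalr. reflexivity.
Qed.

Lemma NNS_nonneg d : (forall i, (i < m)%nat -> 0 <= d i) -> C_NNS n m A d.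
Proof.
  intros H x. unfold Sig. apply rsum_nonneg. intros i Hi.
  apply Rmult_le_pos; [auto| left; apply exp_pos].
Qed.

Lemma SAGE_ext c c' : (forall i, (i < m)%nat -> c i = c' i) -> C_SAGE n m A c -> C_SAGE n m A c'.
Proof.
  intros H [cs [Hcs Hsum]]. exists cs. split; auto. intros i Hi. rewrite <- H; auto.
Qed.

Lemma SAGE_add_nonneg (Hm : (0 < m)%nat) c d :
  C_SAGE n m A c -> (forall i, (i < m)%nat -> 0 <= d i) -> C_SAGE n m A (fun i => c i + d i).
Proof.
  intros [cs [Hcs Hsum]] Hd.
  exists (fun k => if Nat.eqb k 0 then (fun i => cs 0%nat i + 1 * d i) else cs k). split.
  - intros k Hk. destruct (Nat.eqb_spec k 0) as [->|Hne]; auto.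
    destruct (Hcs 0%nat Hm) as [HN HS]. split.
    + intros x. rewrite Sig_lin. pose proof (HN x). pose proof (NNS_nonneg d Hd x). lra.
    + intros i Hi Hik. pose proof (HS i Hi Hik). pose proof (Hd i Hi). lra.
  - intros i Hi. rewrite (rsum_ext m _ (fun k => if Nat.eqb k 0 then cs 0%nat i + 1 * d i else cs k i)).
    + rewrite rsum_if by auto. rewrite Hsum by auto. ring.
    + intros k Hk. destruct (Nat.eqb k 0); reflexivity.
Qed.

Lemma SAGE_set_down (Hm : (0 < m)%nat) c g g' :
  SAGE_set n m A c g -> g' <= g -> SAGE_set n m A c g'.
Proof.
  intros H Hle. unfold SAGE_set.
  apply (SAGE_ext (fun i => shift_e1 c g i + (match i with O => g - g' | _ => 0 end))).
  - intros i Hi. destruct i; simpl; ring.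
  - apply SAGE_add_nonneg; auto. intros i Hi. destruct i; lra.
Qed.

End Basics.


Section Proc.
Variables (n m : nat) (A : nat -> nat -> R).

Definition Dec (c : nat -> R) (cs : nat -> nat -> R) : Prop :=
  (forall k, (k < m)%nat -> C_AGE n m A k (cs k)) /\
  (forall i, (i < m)%nat -> c i = rsum m (fun k => cs k i)).

Definition Good (c : nat -> R) (cs : nat -> nat -> R) (i : nat) : Prop :=
  (0 <= c i -> 0 <= cs i i) /\ (c i < 0 -> forall k, (k < m)%nat -> k <> i -> cs k i = 0).

Lemma rsum_drop (f : nat -> R) i : (i < m)%nat ->
  rsum m f - f i = rsum m (fun k => if Nat.eqb k i then 0 else f k).
Proof. intros Hi. rewrite rsum_if by auto. ring. Qed.

Lemma step c cs i : Dec c cs -> (i < m)%nat ->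
  exists cs', Dec c cs' /\ Good c cs' i /\
    (forall i', (i' < m)%nat -> i' <> i -> Good c cs i' -> Good c cs' i').
Proof.
  intros [Hage Hsum] Hi.
  set (g := cs i i).
  assert (Hbeta : 0 <= c i - g).
  { unfold g. rewrite Hsum by auto. rewrite (rsum_drop (fun k => cs k i)) by auto.
    apply rsum_nonneg. intros k Hk. destruct (Nat.eqb_spec k i); [lra|].
    apply (proj2 (Hage k Hk)); auto. }
  destruct (Rle_or_lt 0 g) as [Hg|Hg].
  - exists cs. split; [split; auto|]. split; [split|].
    + intros; auto.
    + intros Hc. exfalso. lra.
    + auto.
  - set (b := c i - g). set (M := Rmax b (- g)).
    assert (HMb : b <= M) by apply Rmax_l.
    assert (HMg : - g <= M) by apply Rmax_r.
    assert (HM : 0 < M) by lra.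
    set (th := fun k => if Nat.eqb k i then - b / M else cs k i / M).
    exists (fun k j => cs k j + th k * cs i j).
    assert (Hth : forall k, (k < m)%nat -> k <> i -> 0 <= th k).
    { intros k Hk Hne. unfold th. destruct (Nat.eqb_spec k i); [lia|].
      apply Rmult_le_pos; [apply (proj2 (Hage k Hk)); auto| left; apply Rinv_0_lt_compat; auto]. }
    assert (Hsumth : rsum m th = 0).
    { unfold th. rewrite rsum_if by auto.
      rewrite (rsum_ext m _ (fun k => cs k i * / M)) by (intros; reflexivity).
      rewrite rsum_scalr. rewrite <- Hsum by auto. unfold b, g. field. lra. }
    split; [split|split; [split|]].
    + intros k Hk. destruct (Nat.eq_dec k i) as [->|Hne].
      * assert (Hti : th i = - b / M) by (unfold th; rewrite Nat.eqb_refl; auto).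
        split.
        -- intros x. rewrite Sig_lin. rewrite Hti.
           pose proof (proj1 (Hage i Hi) x).
           replace (Sig n m A (cs i) x + - b / M * Sig n m A (cs i) x)
             with ((M - b) / M * Sig n m A (cs i) x) by (field; lra).
           apply Rmult_le_pos; auto. apply Rmult_le_pos; [lra| left; apply Rinv_0_lt_compat; auto].
        -- intros j Hj Hji. rewrite Hti.
           pose proof (proj2 (Hage i Hi) j Hj Hji).
           replace (cs i j + - b / M * cs i j) with ((M - b) / M * cs i j) by (field; lra).
           apply Rmult_le_pos; auto. apply Rmult_le_pos; [lra| left; apply Rinv_0_lt_compat; auto].
      * pose proof (Hth k Hk Hne) as Htk. split.
        -- intros x. rewrite Sig_lin.
           pose proof (proj1 (Hage i Hi) x). pose proof (proj1 (Hage k Hk) x).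
           pose proof (Rmult_le_pos _ _ Htk H). lra.
        -- intros j Hj Hjk. destruct (Nat.eq_dec j i) as [->|Hji].
           ++ assert (Htk' : th k = cs k i / M) by (unfold th; destruct (Nat.eqb_spec k i); [lia|auto]).
              rewrite Htk'. fold g.
              pose proof (proj2 (Hage k Hk) i Hi Hjk).
              replace (cs k i + cs k i / M * g) with (cs k i * ((M + g) / M)) by (field; lra).
              apply Rmult_le_pos; auto. apply Rmult_le_pos; [lra| left; apply Rinv_0_lt_compat; auto].
           ++ pose proof (proj2 (Hage k Hk) j Hj Hjk). pose proof (proj2 (Hage i Hi) j Hj Hji).
              pose proof (Rmult_le_pos _ _ Htk H0). lra.
    + intros j Hj. rewrite rsum_plus. rewrite rsum_scalr. rewrite Hsumth. rewrite <- Hsum by auto. ring.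
    + intros Hc. assert (Hti : th i = - b / M) by (unfold th; rewrite Nat.eqb_refl; auto).
      rewrite Hti. fold g. assert (b >= - g) by (unfold b; lra).
      assert (M = b) by (unfold M; apply Rmax_left; lra).
      rewrite H0. replace (g + - b / b * g) with 0 by (field; lra). lra.
    + intros Hc k Hk Hne.
      assert (Htk' : th k = cs k i / M) by (unfold th; destruct (Nat.eqb_spec k i); [lia|auto]).
      rewrite Htk'. fold g. assert (M = - g) by (unfold M; apply Rmax_right; unfold b; lra).
      rewrite H. field. intro; lra.
    + intros i' Hi' Hne [G1 G2]. split.
      * intros Hc. pose proof (G1 Hc). pose proof (Hth i' Hi' Hne).
        pose proof (proj2 (Hage i Hi) i' Hi' Hne).
        pose proof (Rmult_le_pos _ _ H0 H1). lra.
      * intros Hc k Hk Hki. rewrite (G2 Hc k Hk Hki). rewrite (G2 Hc i Hi) by auto. ring.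
Qed.

Lemma iter_step c cs : Dec c cs -> forall j, (j <= m)%nat ->
  exists cs', Dec c cs' /\ forall i, (i < j)%nat -> Good c cs' i.
Proof.
  intros Hd j. induction j; intros Hj.
  - exists cs. split; auto. intros; lia.
  - destruct IHj as [cs1 [Hd1 HG1]]; [lia|].
    destruct (step c cs1 j Hd1) as [cs2 [Hd2 [HG2 Hpres]]]; [lia|].
    exists cs2. split; auto. intros i Hi.
    destruct (Nat.eq_dec i j) as [->|Hne]; auto.
    apply Hpres; [lia|lia|apply HG1; lia].
Qed.

Lemma bounded_dec c : C_SAGE n m A c ->
  exists cs, Dec c cs /\ forall k i, (k < m)%nat -> (i < m)%nat -> Rabs (cs k i) <= Rabs (c i).
Proof.
  intros [cs0 Hd0].
  destruct (iter_step c cs0 Hd0 m (le_n _)) as [cs [[Hage Hsum] HG]].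
  exists cs. split; [split; auto|].
  intros k i Hk Hi. destruct (HG i Hi) as [G1 G2].
  destruct (Rle_or_lt 0 (c i)) as [Hc|Hc].
  - assert (Hnn : forall k, (k < m)%nat -> 0 <= cs k i).
    { intros k' Hk'. destruct (Nat.eq_dec k' i) as [->|Hne]; auto.
      apply (proj2 (Hage k' Hk')); auto. }
    rewrite Rabs_right by (apply Rle_ge; auto). rewrite Rabs_right by lra.
    rewrite Hsum by auto. apply (rsum_ge_term m (fun k => cs k i)); auto.
  - destruct (Nat.eq_dec k i) as [->|Hne].
    + assert (c i = cs i i).
      { rewrite Hsum by auto.
        rewrite (rsum_ext m _ (fun k => if Nat.eqb k i then cs i i else 0)).
        rewrite rsum_if by auto. rewrite rsum_zero. ring.
        intros k' Hk'. destruct (Nat.eqb_spec k' i) as [->|Hne]; auto. }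
      rewrite H. lra.
    + rewrite (G2 Hc k Hk Hne). rewrite Rabs_R0. apply Rabs_pos.
Qed.

End Proc.


Fixpoint subseq (pick : nat -> nat -> nat) (k : nat) : nat :=
  match k with
  | O => pick O O
  | S k' => pick (S (subseq pick k')) k
  end.

Lemma strict_mono (phi : nat -> nat) : (forall k, (phi k < phi (S k))%nat) ->
  forall i j, (i < j)%nat -> (phi i < phi j)%nat.
Proof.
  intros H i j. induction j; intros Hij; [lia|].
  destruct (Nat.eq_dec i j) as [->|Hne]; auto.
  specialize (IHj ltac:(lia)). specialize (H j). lia.
Qed.

Lemma strict_ge (phi : nat -> nat) : (forall k, (phi k < phi (S k))%nat) -> forall k, (k <= phi k)%nat.
Proof. intros H k. induction k; [lia|]. specialize (H k). lia. Qed.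

Lemma cv_sub (u : nat -> R) l phi : (forall k, (phi k < phi (S k))%nat) ->
  Un_cv u l -> Un_cv (fun k => u (phi k)) l.
Proof.
  intros Hphi Hu e He. destruct (Hu e He) as [N HN]. exists N. intros k Hk.
  apply HN. pose proof (strict_ge phi Hphi k). lia.
Qed.

Lemma bw1 (a : nat -> R) B : (forall k, Rabs (a k) <= B) ->
  exists psi l, (forall k, (psi k < psi (S k))%nat) /\ Un_cv (fun k => a (psi k)) l.
Proof.
  intros HB.
  destruct (Bolzano_Weierstrass a (fun c => -B <= c <= B) (compact_P3 (-B) B)) as [l Hl].
  { intros k. specialize (HB k). unfold Rabs in HB; destruct (Rcase_abs (a k)); lra. }
  assert (H : forall N k, exists p, (N <= p)%nat /\ Rabs (a p - l) < / (INR k + 1)).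
  { intros N k.
    assert (Hpos : 0 < / (INR k + 1)).
    { apply Rinv_0_lt_compat. pose proof (pos_INR k). lra. }
    destruct (Hl (fun y => Rabs (y - l) < / (INR k + 1)) N) as [p Hp].
    - exists (mkposreal _ Hpos). intros y Hy. exact Hy.
    - exists p. exact Hp. }
  set (pick := fun N k => proj1_sig (constructive_indefinite_description _ (H N k))).
  assert (Hpick : forall N k, (N <= pick N k)%nat /\ Rabs (a (pick N k) - l) < / (INR k + 1)).
  { intros N k. unfold pick. destruct (constructive_indefinite_description _ (H N k)). simpl. auto. }
  exists (subseq pick), l. split.
  - intros k. simpl. destruct (Hpick (S (subseq pick k)) (S k)). lia.
  - assert (Hk : forall k, Rabs (a (subseq pick k) - l) < / (INR k + 1)).
    { intros k. destruct k; simpl; apply Hpick. }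
    intros e He. destruct (eps_nat e He) as [N HN]. exists N. intros k Hkn.
    unfold Rdist. specialize (Hk k).
    assert (/ (INR k + 1) <= / (INR N + 1)).
    { apply Rinv_le_contravar. pose proof (pos_INR N); lra.
      apply Rplus_le_compat_r. apply le_INR. lia. }
    lra.
Qed.

Lemma pair_eq_dec (p q : nat * nat) : {p = q} + {p <> q}.
Proof. decide equality; apply Nat.eq_dec. Qed.

Lemma bw_multi (L : list (nat * nat)) (u : nat -> nat * nat -> R) B :
  (forall k q, In q L -> Rabs (u k q) <= B) ->
  exists phi l, (forall k, (phi k < phi (S k))%nat) /\
    forall q, In q L -> Un_cv (fun k => u (phi k) q) (l q).
Proof.
  induction L as [|q0 L IH]; intros HB.
  - exists (fun k => k), (fun _ => 0). split; [intros; lia|]. intros q [].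
  - destruct IH as [phi [l [Hphi Hl]]].
    { intros k q Hq. apply HB. right; auto. }
    destruct (bw1 (fun k => u (phi k) q0) B) as [psi [l0 [Hpsi Hl0]]].
    { intros k. apply HB. left; auto. }
    exists (fun k => phi (psi k)), (fun q => if pair_eq_dec q q0 then l0 else l q). split.
    + intros k. apply strict_mono; auto.
    + intros q Hq. destruct (pair_eq_dec q q0) as [->|Hne].
      * exact Hl0.
      * destruct Hq as [Hq|Hq]; [congruence|].
        apply (cv_sub (fun k => u (phi k) q)); auto.
Qed.

Lemma in_grid m k i : (k < m)%nat -> (i < m)%nat -> In (k, i) (list_prod (seq 0 m) (seq 0 m)).
Proof. intros. apply in_prod; apply in_seq; lia. Qed.

Lemma grid_in m q : In q (list_prod (seq 0 m) (seq 0 m)) -> (fst q < m)%nat /\ (snd q < m)%nat.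
Proof. destruct q as [k i]. intros H. apply in_prod_iff in H. destruct H as [H1 H2].
  apply in_seq in H1. apply in_seq in H2. simpl. lia. Qed.

Lemma inv_cv0 (phi : nat -> nat) : (forall k, (phi k < phi (S k))%nat) ->
  Un_cv (fun k => / (INR (phi k) + 1)) 0.
Proof.
  intros Hphi e He. destruct (eps_nat e He) as [N HN]. exists N. intros k Hk.
  unfold Rdist. rewrite Rminus_0_r.
  pose proof (strict_ge phi Hphi k).
  assert (0 < / (INR (phi k) + 1)) by (apply Rinv_0_lt_compat; pose proof (pos_INR (phi k)); lra).
  rewrite Rabs_right by lra.
  assert (/ (INR (phi k) + 1) <= / (INR N + 1)).
  { apply Rinv_le_contravar. pose proof (pos_INR N); lra.
    apply Rplus_le_compat_r. apply le_INR. lia. }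
  lra.
Qed.

Section Closed.
Variables (n m : nat) (A : nat -> nat -> R).

Lemma SAGE_closed_e1 c :
  (forall e, 0 < e -> SAGE_set n m A c (- e)) -> C_SAGE n m A c.
Proof.
  intros H.
  set (cn := fun k => shift_e1 c (- / (INR k + 1))).
  assert (Hex : forall k, exists cs, Dec n m A (cn k) cs /\
     forall kk i, (kk < m)%nat -> (i < m)%nat -> Rabs (cs kk i) <= Rabs (cn k i)).
  { intros k. apply bounded_dec. apply H. apply Rinv_0_lt_compat. pose proof (pos_INR k). lra. }
  set (D := fun k => proj1_sig (constructive_indefinite_description _ (Hex k))).
  assert (HD : forall k, Dec n m A (cn k) (D k) /\
     forall kk i, (kk < m)%nat -> (i < m)%nat -> Rabs (D k kk i) <= Rabs (cn k i)).
  { intros k. unfold D. destruct (constructive_indefinite_description _ (Hex k)). simpl. auto. }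
  set (B := rsum m (fun i => Rabs (c i)) + 1).
  assert (Hcn : forall k i, (i < m)%nat -> Rabs (cn k i) <= B).
  { intros k i Hi. unfold B, cn.
    pose proof (rsum_ge_term m (fun i => Rabs (c i)) i (fun j _ => Rabs_pos (c j)) Hi).
    assert (0 < / (INR k + 1) <= 1).
    { split. apply Rinv_0_lt_compat. pose proof (pos_INR k). lra.
      rewrite <- Rinv_1. apply Rinv_le_contravar. lra. pose proof (pos_INR k). lra. }
    destruct i; simpl.
    - pose proof (Rabs_triang (c 0%nat) (/ (INR k + 1))).
      rewrite (Rabs_right (/ (INR k + 1))) in H2 by lra.
      replace (c 0%nat - - / (INR k + 1)) with (c 0%nat + / (INR k + 1)) by ring. lra.
    - lra. }
  destruct (bw_multi (list_prod (seq 0 m) (seq 0 m)) (fun k q => D k (fst q) (snd q)) B)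
    as [phi [l [Hphi Hl]]].
  { intros k q Hq. destruct (grid_in m q Hq) as [H1 H2].
    eapply Rle_trans. apply (proj2 (HD k)); auto. apply Hcn; auto. }
  assert (Hcv : forall kk i, (kk < m)%nat -> (i < m)%nat ->
    Un_cv (fun k => D (phi k) kk i) (l (kk, i))).
  { intros kk i Hk Hi. apply (Hl (kk, i)). apply in_grid; auto. }
  exists (fun kk i => l (kk, i)). split.
  - intros kk Hk. split.
    + intros x. unfold Sig.
      apply (cv_le_lower (fun k => rsum m (fun i => D (phi k) kk i * exp (dotcol n A i x)))).
      * apply (rsum_cv m (fun k i => D (phi k) kk i * exp (dotcol n A i x))).
        intros i Hi. apply CV_mult; [apply Hcv; auto| apply cv_const].
      * intros k. apply (proj1 (proj1 (proj1 (HD (phi k))) kk Hk)).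
    + intros i Hi Hik.
      apply (cv_le_lower (fun k => D (phi k) kk i)); [apply Hcv; auto|].
      intros k. apply (proj2 (proj1 (proj1 (HD (phi k))) kk Hk)); auto.
  - intros i Hi.
    apply (UL_sequence (fun k => cn (phi k) i)).
    + unfold cn. destruct i; simpl.
      * apply (Un_cv_ext (fun k => c 0%nat + / (INR (phi k) + 1))); [intros; ring|].
        assert (Hc : Un_cv (fun k => c 0%nat + / (INR (phi k) + 1)) (c 0%nat + 0)).
        { apply (CV_plus (fun _ => c 0%nat) (fun k => / (INR (phi k) + 1))).
          apply cv_const. apply inv_cv0; auto. }
        rewrite Rplus_0_r in Hc. exact Hc.
      * apply cv_const.
    + apply (Un_cv_ext (fun k => rsum m (fun kk => D (phi k) kk i))).
      * intros k. symmetry. apply (proj2 (proj1 (HD (phi k)))); auto.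
      * apply (rsum_cv m (fun k kk => D (phi k) kk i)). intros kk Hk. apply Hcv; auto.
Qed.

End Closed.


Lemma fchoice (m : nat) (P : nat -> R -> Prop) :
  (forall i, (i < m)%nat -> exists y, P i y) -> exists f : nat -> R, forall i, (i < m)%nat -> P i (f i).
Proof.
  intros H.
  assert (H' : forall i, exists y, (i < m)%nat -> P i y).
  { intros i. destruct (Nat.lt_ge_cases i m) as [Hi|Hi].
    - destruct (H i Hi) as [y Hy]. exists y. auto.
    - exists 0. intros; lia. }
  exists (fun i => proj1_sig (constructive_indefinite_description _ (H' i))).
  intros i Hi. destruct (constructive_indefinite_description _ (H' i)). simpl. auto.
Qed.

Lemma cv_affine_sq (a : nat -> R) al P Q :
  Un_cv a al -> Un_cv (fun k => (P + Q * a k) * (P + Q * a k)) ((P + Q * al) * (P + Q * al)).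
Proof.
  intros Ha.
  assert (H1 : Un_cv (fun k => P + Q * a k) (P + Q * al)).
  { apply (CV_plus (fun _ => P) (fun k => Q * a k)). apply cv_const.
    apply (CV_mult (fun _ => Q) a). apply cv_const. auto. }
  apply (CV_mult (fun k => P + Q * a k) (fun k => P + Q * a k)); auto.
Qed.

Lemma quad_neg X Y : 0 <= Y -> (forall t, 0 < t <= 1 -> 2 * t * X <= t * t * Y) -> X <= 0.
Proof.
  intros HY H. destruct (Rle_or_lt X 0) as [|HX]; auto.
  set (t := X / (X + Y)).
  assert (Htx : t * (X + Y) = X) by (unfold t; field; lra).
  assert (Ht0 : 0 < t) by (unfold t; apply Rdiv_lt_0_compat; lra).
  assert (Ht : 0 < t <= 1) by (split; [auto|nra]).
  specialize (H t Ht).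
  nra.
Qed.

Section Sep.
Variable m : nat.

Definition Dist (z w : nat -> R) := rsum m (fun i => (z i - w i) * (z i - w i)).

Lemma Dist_nonneg z w : 0 <= Dist z w.
Proof. apply rsum_nonneg. intros i _. apply Rle_0_sqr. Qed.

Lemma separation (C : (nat -> R) -> Prop) z :
  (exists w0, C w0) ->
  (forall w v t, C w -> C v -> 0 <= t <= 1 -> C (fun i => w i + t * (v i - w i))) ->
  ~ closure m C z ->
  exists c mu, (forall w, C w -> mu <= rsum m (fun i => c i * w i)) /\
    rsum m (fun i => c i * z i) < mu.
Proof.
  intros [w0 Hw0] Hconv Hncl.
  assert (Hfar : exists e, 0 < e /\ forall w, C w -> e * e <= Dist z w).
  { apply not_all_ex_not in Hncl. destruct Hncl as [e He].
    apply imply_to_and in He. destruct He as [He Hn].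
    exists e. split; auto. intros w Hw.
    assert (Hn' : ~ (forall i, (i < m)%nat -> Rabs (z i - w i) < e)) by (intro; apply Hn; exists w; auto).
    apply not_all_ex_not in Hn'. destruct Hn' as [i Hi].
    apply imply_to_and in Hi. destruct Hi as [Hi Hlt].
    apply Rnot_lt_le in Hlt.
    eapply Rle_trans; [|apply (rsum_ge_term m (fun i => (z i - w i) * (z i - w i)) i); auto].
    - unfold Rabs in Hlt. destruct (Rcase_abs (z i - w i)); nra.
    - intros ii _; apply Rle_0_sqr. }
  destruct Hfar as [e [He Hfar]].
  set (X := fun r => exists w, C w /\ r = - Dist z w).
  destruct (completeness X) as [s [Hs1 Hs2]].
  { exists (- (e * e)). intros r [w [Hw ->]]. specialize (Hfar w Hw). lra. }
  { exists (- Dist z w0). exists w0. auto. }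
  set (d := - s).
  assert (Hd1 : forall w, C w -> d <= Dist z w).
  { intros w Hw. assert (- Dist z w <= s) by (apply Hs1; exists w; auto). unfold d; lra. }
  assert (Hde : e * e <= d).
  { assert (s <= - (e * e)). apply Hs2. intros r [w [Hw ->]]. specialize (Hfar w Hw). lra.
    unfold d; lra. }
  assert (Hd2 : forall delta, 0 < delta -> exists w, C w /\ Dist z w < d + delta).
  { intros delta Hdel. apply NNPP. intros Hn.
    assert (s <= s - delta).
    { apply Hs2. intros r [w [Hw ->]]. apply Rnot_lt_le. intros Hlt. apply Hn.
      exists w. split; auto. unfold d. lra. }
    lra. }
  assert (Hseq : forall k, exists w, C w /\ Dist z w < d + / (INR k + 1)).
  { intros k. apply Hd2. apply Rinv_0_lt_compat. pose proof (pos_INR k). lra. }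
  set (W := fun k => proj1_sig (constructive_indefinite_description _ (Hseq k))).
  assert (HW : forall k, C (W k) /\ Dist z (W k) < d + / (INR k + 1)).
  { intros k. unfold W. destruct (constructive_indefinite_description _ (Hseq k)). simpl. auto. }
  assert (Hpar : forall k l, Dist (W k) (W l) < 2 * / (INR k + 1) + 2 * / (INR l + 1)).
  { intros k l.
    set (mid := fun j => W k j + / 2 * (W l j - W k j)).
    assert (Hmid : C mid) by (apply Hconv; [apply HW|apply HW|lra]).
    assert (Hid : Dist (W k) (W l) = 2 * Dist z (W k) + 2 * Dist z (W l) - 4 * Dist z mid).
    { unfold Dist. rewrite <- !rsum_scal, <- rsum_plus, <- rsum_minus.
      apply rsum_ext. intros j Hj. unfold mid. field. }
    rewrite Hid. pose proof (Hd1 mid Hmid). pose proof (proj2 (HW k)). pose proof (proj2 (HW l)).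
    lra. }
  assert (Hcau : forall i, (i < m)%nat -> Cauchy_crit (fun k => W k i)).
  { intros i Hi eps Heps.
    destruct (eps_nat (eps * eps / 4)) as [N HN].
    { apply Rdiv_lt_0_compat; nra. }
    exists N. intros k l Hk Hl. unfold Rdist.
    specialize (Hpar k l).
    assert (/ (INR k + 1) <= / (INR N + 1)).
    { apply Rinv_le_contravar. pose proof (pos_INR N); lra.
      apply Rplus_le_compat_r. apply le_INR. lia. }
    assert (/ (INR l + 1) <= / (INR N + 1)).
    { apply Rinv_le_contravar. pose proof (pos_INR N); lra.
      apply Rplus_le_compat_r. apply le_INR. lia. }
    assert (Hsq : (W k i - W l i) * (W k i - W l i) < eps * eps).
    { eapply Rle_lt_trans.
      apply (rsum_ge_term m (fun j => (W k j - W l j) * (W k j - W l j)) i); auto.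
      intros ii _; apply Rle_0_sqr. unfold Dist in Hpar. lra. }
    unfold Rabs. destruct (Rcase_abs (W k i - W l i)); nra. }
  destruct (fchoice m (fun i y => Un_cv (fun k => W k i) y)) as [p Hp].
  { intros i Hi. destruct (R_complete _ (Hcau i Hi)) as [y Hy]. exists y; auto. }
  assert (Hlim : forall v t, Un_cv (fun k => Dist z (fun i => W k i + t * (v i - W k i)))
                                    (Dist z (fun i => p i + t * (v i - p i)))).
  { intros v t. unfold Dist.
    apply (rsum_cv m (fun k i => (z i - (W k i + t * (v i - W k i))) * (z i - (W k i + t * (v i - W k i))))).
    intros i Hi.
    apply (Un_cv_ext (fun k => ((z i - t * v i) + (t - 1) * W k i) * ((z i - t * v i) + (t - 1) * W k i))).
    { intros; ring. }
    replace ((z i - (p i + t * (v i - p i))) * (z i - (p i + t * (v i - p i))))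
      with (((z i - t * v i) + (t - 1) * p i) * ((z i - t * v i) + (t - 1) * p i)) by ring.
    apply cv_affine_sq. apply Hp; auto. }
  assert (Hdp : Dist z p = d).
  { assert (Hl0 := Hlim z 0).
    assert (Heq : forall w, Dist z (fun i => w i + 0 * (z i - w i)) = Dist z w).
    { intros w. unfold Dist. apply rsum_ext. intros; ring. }
    rewrite Heq in Hl0.
    apply (Un_cv_ext _ (fun k => Dist z (W k))) in Hl0; [|intros; apply Heq].
    apply Rle_antisym.
    - apply (cv_le_upper _ _ _ Hl0). intros k. apply HW.
    - apply (cv_le_lower _ _ _ Hl0). intros k. apply Hd1. apply HW. }
  assert (Hineq : forall v, C v ->
    rsum m (fun i => (z i - p i) * (v i - p i)) <= 0).
  { intros v Hv. apply (quad_neg _ (rsum m (fun i => (v i - p i) * (v i - p i)))).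
    - apply rsum_nonneg. intros ii _; apply Rle_0_sqr.
    - intros t Ht.
      assert (Hge : d <= Dist z (fun i => p i + t * (v i - p i))).
      { apply (cv_le_lower _ _ _ (Hlim v t)). intros k. apply Hd1. apply Hconv; auto. apply HW. lra. }
      assert (Hexp : Dist z (fun i => p i + t * (v i - p i)) =
         Dist z p - 2 * t * rsum m (fun i => (z i - p i) * (v i - p i))
         + t * t * rsum m (fun i => (v i - p i) * (v i - p i))).
      { unfold Dist. rewrite <- !rsum_scal, <- rsum_minus, <- rsum_plus. apply rsum_ext. intros; ring. }
      lra. }
  exists (fun i => p i - z i), (rsum m (fun i => (p i - z i) * p i)). split.
  - intros w Hw. specialize (Hineq w Hw).
    assert (Heq : rsum m (fun i => (z i - p i) * (w i - p i)) =
      rsum m (fun i => (p i - z i) * p i) - rsum m (fun i => (p i - z i) * w i)).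
    { rewrite <- rsum_minus. apply rsum_ext. intros; ring. }
    lra.
  - assert (rsum m (fun i => (p i - z i) * p i) - rsum m (fun i => (p i - z i) * z i) = Dist z p).
    { rewrite <- rsum_minus. unfold Dist. apply rsum_ext. intros; ring. }
    nra.
Qed.

End Sep.


Lemma conv_convex m (X : (nat -> R) -> Prop) w v t :
  conv m X w -> conv m X v -> 0 <= t <= 1 -> conv m X (fun i => w i + t * (v i - w i)).
Proof.
  intros [k1 [l1 [p1 [H1 [S1 E1]]]]] [k2 [l2 [p2 [H2 [S2 E2]]]]] Ht.
  exists (k1 + k2)%nat,
    (fun l => if Nat.ltb l k1 then (1 - t) * l1 l else t * l2 (l - k1)%nat),
    (fun l => if Nat.ltb l k1 then p1 l else p2 (l - k1)%nat).
  assert (Hlo : forall (f g : nat -> R), rsum k1 (fun l => if Nat.ltb l k1 then f l else g l) = rsum k1 f).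
  { intros f g. apply rsum_ext. intros l Hl. destruct (Nat.ltb_spec l k1); [auto|lia]. }
  assert (Hhi : forall (f : nat -> R) (g : nat -> R),
     rsum k2 (fun l => if Nat.ltb (k1 + l) k1 then f (k1 + l)%nat else g (k1 + l - k1)%nat) = rsum k2 g).
  { intros f g. apply rsum_ext. intros l Hl. destruct (Nat.ltb_spec (k1 + l) k1); [lia|].
    f_equal. lia. }
  split; [|split].
  - intros l Hl. destruct (Nat.ltb_spec l k1).
    + destruct (H1 l) as [Ha Hb]; auto. split; auto. apply Rmult_le_pos; lra.
    + destruct (H2 (l - k1)%nat) as [Ha Hb]; [lia|]. split; auto. apply Rmult_le_pos; lra.
  - rewrite rsum_app. rewrite Hlo.
    rewrite (Hhi (fun l => (1 - t) * l1 l) (fun l => t * l2 l)).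
    rewrite !rsum_scal. rewrite S1, S2. ring.
  - intros i Hi. rewrite rsum_app.
    rewrite (rsum_ext k1 _ (fun l => (1 - t) * (l1 l * p1 l i))).
    2: { intros l Hl. destruct (Nat.ltb_spec l k1); [ring|lia]. }
    rewrite (rsum_ext k2 _ (fun l => t * (l2 l * p2 l i))).
    2: { intros l Hl. destruct (Nat.ltb_spec (k1 + l) k1); [lia|].
         replace (k1 + l - k1)%nat with l by lia. ring. }
    rewrite !rsum_scal. rewrite <- E1, <- E2 by auto. ring.
Qed.

Section Main.
Variables (n m : nat) (A : nat -> nat -> R).

Lemma E_in_conv w : exp_range n m A w -> conv m (exp_range n m A) w.
Proof.
  intros Hw. exists 1%nat, (fun _ => 1), (fun _ => w). split; [|split].
  - intros l Hl. split; auto; lra.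
  - simpl. ring.
  - intros i Hi. simpl. ring.
Qed.

Lemma exp_range_ne : exp_range n m A (fun _ => 1).
Proof. exists (fun _ => 0). intros i Hi. rewrite dotcol_zero, exp_0. reflexivity. Qed.

Lemma NNS_moment c x w : C_NNS n m A c ->
  closure m (conv m (exp_range n m A)) w ->
  0 <= rsum m (fun i => c i * exp (dotcol n A i x) * w i).
Proof.
  intros Hc Hw.
  set (b := fun i => c i * exp (dotcol n A i x)).
  assert (HE : forall w, exp_range n m A w -> 0 <= rsum m (fun i => b i * w i)).
  { intros w' [x' Hx']. 
    rewrite (rsum_ext m _ (fun i => c i * exp (dotcol n A i (fun j => x j + x' j)))).
    - apply Hc.
    - intros i Hi. unfold b. rewrite Hx' by auto. rewrite dotcol_plus, exp_plus. ring. }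
  assert (HC : forall w, conv m (exp_range n m A) w -> 0 <= rsum m (fun i => b i * w i)).
  { intros w' [k [l [p [H1 [H2 H3]]]]].
    rewrite (rsum_ext m _ (fun i => rsum k (fun j => l j * (b i * p j i)))).
    - rewrite rsum_swap. apply rsum_nonneg. intros j Hj. rewrite rsum_scal.
      destruct (H1 j Hj). apply Rmult_le_pos; auto.
    - intros i Hi. rewrite H3 by auto. rewrite <- rsum_scal. apply rsum_ext. intros; ring. }
  change (0 <= rsum m (fun i => b i * w i)).
  apply Rnot_lt_le. intros Hneg.
  set (G := rsum m (fun i => b i * w i)). fold G in Hneg.
  set (M := rsum m (fun i => Rabs (b i)) + 1).
  assert (HM : 1 <= M) by (unfold M; pose proof (rsum_nonneg m (fun i => Rabs (b i)) (fun i _ => Rabs_pos (b i))); lra).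
  destruct (Hw (- G / M)) as [w' [Hw' Hcl]].
  { apply Rdiv_lt_0_compat; lra. }
  pose proof (HC w' Hw').
  assert (rsum m (fun i => b i * w' i) - G <= rsum m (fun i => Rabs (b i)) * (- G / M)).
  { unfold G. rewrite <- rsum_minus, <- rsum_scalr. apply rsum_le. intros i Hi.
    specialize (Hcl i Hi).
    replace (b i * w' i - b i * w i) with (b i * (w' i - w i)) by ring.
    eapply Rle_trans. apply Rle_abs. rewrite Rabs_mult.
    apply Rmult_le_compat_l. apply Rabs_pos.
    rewrite Rabs_minus_sym. unfold G in Hcl. lra. }
  assert (rsum m (fun i => Rabs (b i)) * (- G / M) < M * (- G / M)).
  { apply Rmult_lt_compat_r. apply Rdiv_lt_0_compat; lra. unfold M; lra. }
  assert (M * (- G / M) = - G) by (field; lra).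
  lra.
Qed.

End Main.

Theorem mainTheorem20 (n m : nat) (A : nat -> nat -> R) (S : (nat -> R) -> Prop)
  (Hm : (0 < m)%nat)
  (Hdist : distinct_columns n m A)
  (Ha1 : forall j, (j < n)%nat -> A 0%nat j = 0)
  (HS : SAGE_feasible_slacks n m A S) :
  (forall c : nat -> R, C_SAGE n m A c <-> C_NNS n m A c) <->
  (forall s, S s -> T_moment n m A s).
Proof.
  split.
  - intros Hiff s Hs. apply NNPP. intros Hn. unfold T_moment in Hn.
    destruct (separation m (conv m (exp_range n m A)) (fun i => exp (s i))) as [c [mu [Hsep Hlt]]].
    + exists (fun _ => 1). apply E_in_conv. apply exp_range_ne.
    + intros w v t Hw Hv Ht. apply conv_convex; auto.
    + exact Hn.
    + assert (Hnns : C_NNS n m A (shift_e1 c mu)).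
      { intros x. rewrite Sig_shift by auto.
        assert (mu <= Sig n m A c x).
        { unfold Sig. apply (Hsep (fun i => exp (dotcol n A i x))).
          apply E_in_conv. exists x. auto. }
        lra. }
      apply Hiff in Hnns.
      destruct (HS c) as [u [[Hsup1 Hsup2] [Hinf1 Hinf2]]].
      pose proof (Hsup1 mu Hnns) as H1.
      assert (Hsl : slack_values n m A S c (rsum m (fun i => c i * exp (s i)))).
      { exists s. split; auto. exists (fun _ => 0), s. split; auto.
        intros i Hi. rewrite dotcol_zero. ring. }
      pose proof (Hinf1 _ Hsl) as H2.
      destruct u; simpl in *; lra.
  - intros HT c. split; [apply SAGE_NNS|]. intros Hc.
    apply SAGE_closed_e1. intros e He. apply NNPP. intros Hn.
    destruct (HS c) as [u [[Hsup1 Hsup2] [Hinf1 Hinf2]]].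
    assert (H0 : ERle (Fin 0) u).
    { apply Hinf2. intros t [y [[x [s [Hs Hy]]] ->]]. simpl.
      pose proof (NNS_moment n m A c x (fun i => exp (s i)) Hc (HT s Hs)).
      rewrite (rsum_ext m _ (fun i => c i * exp (dotcol n A i x) * exp (s i))); auto.
      intros i Hi. rewrite Hy by auto. rewrite exp_plus. ring. }
    assert (H1 : ERle u (Fin (- e))).
    { apply Hsup2. intros g Hg. simpl. apply Rnot_lt_le. intros Hlt.
      apply Hn. apply (SAGE_set_down n m A Hm c g); auto; lra. }
    destruct u; simpl in *; lra.
Qed.
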